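(* In the setting below, for every nonempty $A\subseteq[n]$: $\Pr_{(f,g,h)\sim\Psi}(\neg E_1(f,g,h))\le 2^{-6}$, where $E_1(f,g,h)$ is the event $2^{-16}b\le 2^{-t(f)}|A|\le 2^{-1}b$.
   Context: $[N]:=\{0,\dots,N-1\}$. Fix integers $n\ge1$ and real $0<\varepsilon<1$. Let $b:=2^{\lceil\log_2(9\cdot 2^{23}\varepsilon^{-2})\rceil}$ and $k:=\lceil\tfrac{15}{2}\ln b+16\rceil$. Hash families: for $d\ge1$, identify $[2^d]$ with the field $\mathrm{GF}(2^d)$ via the binary representation (bits as coordinates in a fixed polynomial basis). For integers $k'\ge1$, $N\le 2^d$ and $c\le d$, $\mathcal H_{k'}([N],[2^c])$ is the uniform distribution over coefficient tuples $(a_0,\dots,a_{k'-1})\in\mathrm{GF}(2^d)^{k'}$, each giving the function $x\mapsto(\sum_i a_ix^i)\bmod 2^c$ on $[N]$ (field elements read as integers in $[2^d]$); $\mathcal G_{k'}([N])$ is the uniform distribution over the same tuples giving $x\mapsto \mathrm{tz}(\sum_i a_ix^i)$, where $\mathrm{tz}(y)$ is the number of trailing zeros of the $d$-bit binary representation of $y$ (with $\mathrm{tz}(0)=d$). Here $d$ is a fixed integer with $2^d\ge N$ and $d\ge c$. $\Psi:=\mathcal G_2([n])\times\mathcal H_2([n],[2^5b^2])\times\mathcal H_k([2^5b^2],[b])$ with the product (uniform) distribution; elements $\psi=(f,g,h)$. For fixed nonempty $A\subseteq[n]$: $t(f):=\max_{a\in A}f(a)-\log_2 b+9$. *)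

(* Defs.v *)
From HB Require Import structures.
From mathcomp Require Import all_boot all_order all_algebra.
From mathcomp Require Import all_classical all_reals all_analysis.
Unset Printing Implicit Defensive.
Import Order.TTheory GRing.Theory Num.Theory.
Local Open Scope ring_scope.

(* An integer x in [2^d] is identified with the field element whose
   coordinates in the polynomial basis 1, X, ..., X^(d-1) are the bits of x. *)
Definition nat2poly (d x : nat) : {poly 'F_2} :=
  \poly_(i < d) ((odd (x %/ 2 ^ i))%:R : 'F_2).

Definition poly2nat (q : {poly 'F_2}) : nat :=
  (\sum_(i < size q) (nat_of_ord ((q`_i)%R : 'F_2)) * 2 ^ i)%N.

Definition gfeval (p : {poly 'F_2}) (d k : nat) (a : 'I_k -> nat) (x : nat)
  : nat :=
  poly2nat ((\sum_(i < k) nat2poly d (a i) * nat2poly d x ^+ i) %% p).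

(* number of trailing zeros of the d-bit representation of y; tz 0 = d *)
Definition tz (d y : nat) : nat := if y == 0%N then d else logn 2 y.

(* coefficient tuples in GF(2^d)^k, read as integers in [2^d] *)
Definition coeffs (d k : nat) := {ffun 'I_k -> 'I_(2 ^ d)}.

Definition Gfun (p : {poly 'F_2}) (d k : nat) (a : coeffs d k) (x : nat) : nat :=
  tz d (gfeval p d k (fun i => nat_of_ord (a i)) x).

Definition Hfun (p : {poly 'F_2}) (d k c : nat) (a : coeffs d k) (x : nat) : nat :=
  (gfeval p d k (fun i => nat_of_ord (a i)) x %% 2 ^ c)%N.

(* log2 b = ceil(log2(9 * 2^23 * eps^-2)); positive since eps < 1 *)
Definition log2b {R : realType} (eps : R) : nat :=
  `| Num.ceil (ln (9 * 2 ^+ 23 / eps ^+ 2) / ln 2) |%N.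

Definition bpar {R : realType} (eps : R) : nat := (2 ^ log2b eps)%N.

Definition kpar {R : realType} (eps : R) : nat :=
  `| Num.ceil (15 / 2 * ln ((bpar eps)%:R : R) + 16) |%N.

(* ---------- the sample space Psi = G_2([n]) x H_2([n],[2^5 b^2]) x H_k([2^5 b^2],[b]) *)
Definition Psi (d1 d2 d3 k : nat) : finType :=
  (coeffs d1 2 * coeffs d2 2 * coeffs d3 k)%type.

Definition maxf {n : nat} (A : {set 'I_n}) (p1 : {poly 'F_2}) (d1 : nat)
  (f : coeffs d1 2) : nat :=
  (\max_(a in A) Gfun p1 d1 2 f (nat_of_ord a))%N.

Definition tpar {R : realType} (eps : R) {n : nat} (A : {set 'I_n})
  (p1 : {poly 'F_2}) (d1 : nat) (f : coeffs d1 2) : int :=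
  ((maxf A p1 d1 f)%:Z - (log2b eps)%:Z + 9)%R.

Definition E1 {R : realType} (eps : R) {n : nat} (A : {set 'I_n})
  (p1 : {poly 'F_2}) (d1 d2 d3 : nat)
  (psi : Psi d1 d2 d3 (kpar eps)) : bool :=
  let f := psi.1.1 in
  let bR := ((bpar eps)%:R : R) in
  let v := (2 : R) ^ (- tpar eps A p1 d1 f) * (#|A|%:R) in
  (2 ^- 16 * bR <= v) && (v <= 2 ^- 1 * bR).

Definition prob_notE1 {R : realType} (eps : R) {n : nat} (A : {set 'I_n})
  (p1 : {poly 'F_2}) (d1 d2 d3 : nat) : R :=
  (#|[set psi : Psi d1 d2 d3 (kpar eps) | ~~ E1 eps A p1 d1 d2 d3 psi]|%:R
     / #|[set: Psi d1 d2 d3 (kpar eps)]|%:R).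

(* Main.v *)
Require Import Defs.
From HB Require Import structures.
From mathcomp Require Import all_boot all_order all_algebra.
From mathcomp Require Import all_classical all_reals all_analysis.
From mathcomp Require Import zify ring lra.
Import Order.TTheory GRing.Theory Num.Theory.
Local Open Scope ring_scope.

Lemma irr_euclid (p q r : {poly 'F_2}) : irreducible_poly p ->
  p %| q * r -> (p %| q) || (p %| r).
Proof.
move=> irr pqr; case pq: (p %| q) => //=.
have g1 : size (gcdp p q) == 1%N.
  apply/negPn/negP => H.
  have e := irr _ H (dvdp_gcdl p q).
  by move: pq; rewrite -(eqp_dvdl _ e) dvdp_gcdr.
by rewrite -(Gauss_dvdpr _ (_ : coprimep p q)) // coprimep_def.
Qed.

Lemma coefMXaddC' (p : {poly 'F_2}) c i : (p * 'X + c%:P)`_i = if i is j.+1 then p`_j else c.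
Proof. by rewrite coefD coefMX coefC; case: i => [|j] /=; rewrite ?add0r ?addr0. Qed.

Lemma poly2nat_ext (q : {poly 'F_2}) m : (size q <= m)%N ->
  poly2nat q = (\sum_(i < m) (nat_of_ord ((q`_i)%R : 'F_2)) * 2 ^ i)%N.
Proof.
move=> hm; rewrite /poly2nat -(subnKC hm) big_split_ord /=.
rewrite [X in (_ = _ + X)%N]big1 ?addn0 // => i _.
by rewrite nth_default ?leq_addr.
Qed.

Lemma poly2nat_cons (p : {poly 'F_2}) c :
  poly2nat (p * 'X + c%:P) = (nat_of_ord c + 2 * poly2nat p)%N.
Proof.
rewrite (@poly2nat_ext _ (size p).+1); last first.
  by rewrite size_MXaddC; case: ifP.
rewrite big_ord_recl /= coefMXaddC' expn0 muln1 (@poly2nat_ext p _ (leqnn (size p))).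
congr (_ + _)%N; rewrite big_distrr /=; apply: eq_bigr => i _.
by rewrite coefMXaddC' expnS mulnCA.
Qed.

Lemma nat2poly_S d m : nat2poly d.+1 m = nat2poly d (m %/ 2) * 'X + ((odd m)%:R)%:P.
Proof.
apply/polyP => i; rewrite coefMXaddC' /nat2poly !coef_poly.
case: i => [|j] /=; first by rewrite expn0 divn1.
by rewrite ltnS coef_poly expnS divnMA.
Qed.

Set Implicit Arguments. Unset Strict Implicit.

Lemma F2_cases (c : 'F_2) : (nat_of_ord c < 2)%N.
Proof. by case: c. Qed.

Lemma F2_odd (c : 'F_2) : ((odd (nat_of_ord c))%:R : 'F_2) = c.
Proof.
apply/val_inj; case: c => [[|[|m]] Hm] //=.
Qed.

Lemma odd_F2 (b : bool) : nat_of_ord ((b%:R : 'F_2)) = b.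
Proof. by case: b. Qed.

Lemma size_le_case (q : {poly 'F_2}) d : (size q <= d.+1)%N ->
  exists p c, q = p * 'X + c%:P /\ (size p <= d)%N.
Proof.
elim/poly_ind: q => [|p c _] h.
  by exists 0, 0; rewrite mul0r add0r size_poly0.
exists p, c; split => //; move: h; rewrite size_MXaddC; case: ifP => //.
by case/andP => /eqP -> _; rewrite size_poly0.
Qed.

Lemma nat2polyK d (q : {poly 'F_2}) : (size q <= d)%N -> nat2poly d (poly2nat q) = q.
Proof.
elim: d q => [|d IH] q hq.
  move: hq; rewrite leqn0 size_poly_eq0 => /eqP ->.
  by apply/polyP => i; rewrite coef_poly coef0.
have [p [c [-> hp]]] := size_le_case hq.
rewrite nat2poly_S poly2nat_cons; congr (_ * _ + _%:P).
  rewrite divnDr ?dvdn_mulr // mulKn // divn_small ?F2_cases // add0n; exact: IH.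
by rewrite oddD oddM /= addbF F2_odd.
Qed.

Lemma poly2nat_lt d (q : {poly 'F_2}) : (size q <= d)%N -> (poly2nat q < 2 ^ d)%N.
Proof.
elim: d q => [|d IH] q hq.
  by move: hq; rewrite leqn0 size_poly_eq0 => /eqP ->; rewrite /poly2nat size_poly0 big_ord0.
have [p [c [-> hp]]] := size_le_case hq.
rewrite poly2nat_cons expnS; have := IH p hp; have := F2_cases c; lia.
Qed.

Lemma poly2natK d x : (x < 2 ^ d)%N -> poly2nat (nat2poly d x) = x.
Proof.
elim: d x => [|d IH] x hx.
  rewrite expn0 ltnS leqn0 in hx; rewrite (eqP hx).
  by rewrite /nat2poly poly_def big_ord0 /poly2nat size_poly0 big_ord0.
rewrite nat2poly_S poly2nat_cons odd_F2 IH; first by rewrite [RHS](divn_eq x 2) -modn2; lia.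
by rewrite expnS in hx; rewrite ltn_divLR //; lia.
Qed.

Lemma size_nat2poly d x : (size (nat2poly d x) <= d)%N.
Proof. exact: size_poly. Qed.

Definition hv (p : {poly 'F_2}) d (f : coeffs d 2) x :=
  gfeval p d 2 (fun i => nat_of_ord (f i)) x.
Arguments hv p d f x : clear implicits.

Definition Sp d (f : coeffs d 2) x : {poly 'F_2} :=
  nat2poly d (f ord0) + nat2poly d (f ord_max) * nat2poly d x.

Lemma hvE p d f x : hv p d f x = poly2nat (Sp f x %% p).
Proof.
rewrite /hv /gfeval /Sp big_ord_recr big_ord_recr big_ord0 /= add0r expr0 mulr1 expr1.
by congr (poly2nat ((nat2poly d (f _) + _) %% _)); apply: val_inj.
Qed.

Lemma size_small (p : {poly 'F_2}) d (q : {poly 'F_2}) : size p = d.+1 -> (size q <= d)%N -> p %| q -> q = 0.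
Proof.
move=> sp sq pq; apply/eqP; apply/negP => /negP q0.
move: (dvdp_leq q0 pq); rewrite sp => h; have := leq_trans h sq; by rewrite ltnn.
Qed.

Lemma size_mod (p : {poly 'F_2}) d (q : {poly 'F_2}) : size p = d.+1 -> (size (q %% p)%R <= d)%N.
Proof.
move=> sp; have : p != 0 by rewrite -size_poly_eq0 sp.
by move=> p0; have := ltn_modpN0 q p0; rewrite sp ltnS.
Qed.

Lemma hv_lt (p : {poly 'F_2}) d (f : coeffs d 2) x : size p = d.+1 -> (hv p d f x < 2 ^ d)%N.
Proof. by move=> sp; rewrite hvE; apply: poly2nat_lt; apply: size_mod. Qed.

Lemma size_sub d (a b : {poly 'F_2}) : (size a <= d)%N -> (size b <= d)%N -> (size (a - b)%R <= d)%N.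
Proof.
move=> ha hb; apply: leq_trans (size_polyD _ _) _; by rewrite size_polyN geq_max ha hb.
Qed.

Lemma hv_inj (p : {poly 'F_2}) d x y (f g : coeffs d 2) : irreducible_poly p -> size p = d.+1 ->
  x != y -> (x < 2 ^ d)%N -> (y < 2 ^ d)%N ->
  hv p d f x = hv p d g x -> hv p d f y = hv p d g y -> f = g.
Proof.
move=> irr sp xy hx hy; rewrite !hvE => ex ey.
have modeq : forall z, poly2nat (Sp f z %% p) = poly2nat (Sp g z %% p) ->
    p %| Sp f z - Sp g z.
  move=> z e; apply/modp_eq0P; rewrite modpD modpN.
  by rewrite -(nat2polyK (size_mod _ sp)) e (nat2polyK (size_mod _ sp)) subrr.
have dx := modeq _ ex; have dy := modeq _ ey.
set F0 := nat2poly d (f ord0); set F1 := nat2poly d (f ord_max).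
set G0 := nat2poly d (g ord0); set G1 := nat2poly d (g ord_max).
set X := nat2poly d x; set Y := nat2poly d y.
have hs : forall z, (size (nat2poly d z) <= d)%N by move=> z; exact: size_nat2poly.
have E : Sp f x - Sp g x - (Sp f y - Sp g y) = (F1 - G1) * (X - Y).
  rewrite /Sp -/F0 -/F1 -/G0 -/G1 -/X -/Y; ring.
have := dvdp_sub dx dy; rewrite E => /(irr_euclid _ _ _ irr) /orP [] h.
- have e1 : F1 = G1.
    apply/eqP; rewrite -subr_eq0; apply/eqP; apply: (size_small sp _ h); apply: size_sub; apply: hs.
  have : p %| F0 - G0.
    move: dx; rewrite /Sp -/F0 -/F1 -/G0 -/G1 e1 -/X.
    by have -> : F0 + G1 * X - (G0 + G1 * X) = F0 - G0 by ring.
  move=> /(size_small sp (size_sub (hs _) (hs _))) /eqP; rewrite subr_eq0 => /eqP e0.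
  have i0 : forall (a b : 'I_(2 ^ d)%N), nat2poly d a = nat2poly d b -> a = b.
    by move=> a b e; apply: val_inj => /=; rewrite -(poly2natK (ltn_ord a)) e poly2natK.
  have h0 : f ord0 = g ord0 := i0 _ _ e0.
  have h1 : f ord_max = g ord_max := i0 _ _ e1.
  apply/ffunP => i; case: i => [[|[|k]] hk] //.
  + by have -> : Ordinal hk = ord0 by apply: val_inj.
  + by have -> : Ordinal hk = ord_max by apply: val_inj.
- have := size_small sp (size_sub (hs _) (hs _)) h; move/eqP; rewrite subr_eq0 => /eqP.
  move=> /(congr1 poly2nat); rewrite !poly2natK // => exy.
  by move: xy; rewrite exy eqxx.
Qed.

Local Close Scope ring_scope.

Lemma count2 (p : {poly 'F_2}) d x y (P Q : nat -> bool) :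
  irreducible_poly p -> size p = d.+1 -> x != y -> x < 2 ^ d -> y < 2 ^ d ->
  #|[set f : coeffs d 2 | P (hv p d f x) && Q (hv p d f y)]| =
  #|[set u : 'I_(2 ^ d) | P u]| * #|[set v : 'I_(2 ^ d) | Q v]|.
Proof.
move=> irr sp xy hx hy.
pose phi (f : coeffs d 2) : 'I_(2 ^ d) * 'I_(2 ^ d) :=
  (Ordinal (hv_lt f x sp), Ordinal (hv_lt f y sp)).
have injphi : injective phi.
  move=> f g [] e1 e2; exact: (hv_inj irr sp xy hx hy e1 e2).
have bij : bijective phi.
  apply: inj_card_bij injphi _.
  by rewrite card_prod card_ffun !card_ord.
rewrite -cardsX -(on_card_preimset (onW_bij _ bij)).
apply: eq_card => f; rewrite !inE /=; done.
Qed.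

Lemma count1 (p : {poly 'F_2}) d x (P : nat -> bool) :
  irreducible_poly p -> size p = d.+1 -> x < 2 ^ d ->
  #|[set f : coeffs d 2 | P (hv p d f x)]| = #|[set u : 'I_(2 ^ d) | P u]| * 2 ^ d.
Proof.
move=> irr sp hx.
have d1 : 0 < d by case: irr => h _; rewrite sp in h.
have two : 2 <= 2 ^ d by rewrite -{1}(expn1 2) leq_exp2l.
pose y := if x == 0 then 1 else 0.
have xy : x != y by rewrite /y; case: (x =P 0) => [->|/eqP].
have hy : y < 2 ^ d by rewrite /y; case: eqP => _; lia.
have := count2 P predT irr sp xy hx hy.
have -> : #|[set v : 'I_(2 ^ d) | predT v]| = 2 ^ d by rewrite cardsT card_ord.
move <-; apply: eq_card => f; by rewrite !inE andbT.
Qed.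

Lemma tz_le d u : u < 2 ^ d -> tz d u <= d.
Proof.
rewrite /tz; case: eqP => // /eqP u0 hu.
have := dvdn_leq _ (pfactor_dvdnn 2 u); rewrite lt0n u0 => /(_ isT) h.
have : 2 ^ logn 2 u < 2 ^ d := leq_ltn_trans h hu.
by rewrite ltn_exp2l // => /ltnW.
Qed.

Lemma tz_dvd d u j : u < 2 ^ d -> j <= d -> (j <= tz d u) = (2 ^ j %| u).
Proof.
rewrite /tz; case: eqP => [-> _ ->|/eqP u0 _ _]; first by rewrite dvdn0.
by rewrite pfactor_dvdn // lt0n.
Qed.

Lemma count_mult d j : j <= d -> #|[set u : 'I_(2 ^ d) | 2 ^ j %| u]| = 2 ^ (d - j).
Proof.
move=> jd.
have lt : forall w : 'I_(2 ^ (d - j)), 2 ^ j * w < 2 ^ d.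
  move=> w; rewrite -{2}(subnKC jd) expnD ltn_pmul2l ?expn_gt0 //.
pose g (w : 'I_(2 ^ (d - j))) : 'I_(2 ^ d) := Ordinal (lt w).
have ginj : injective g.
  move=> w1 w2 [] e; apply: val_inj => /=.
  by move: e => /eqP; rewrite eqn_pmul2l ?expn_gt0 // => /eqP.
rewrite -[RHS](card_ord (2 ^ (d - j))) -[X in _ = X](card_imset _ ginj).
apply: eq_card => u; rewrite inE; apply/idP/imsetP.
- move=> /dvdnP [w ew].
  have hw : w < 2 ^ (d - j).
    by rewrite -(ltn_pmul2l (expn_gt0 2 j)) -expnD subnKC // mulnC -ew.
  exists (Ordinal hw) => //; apply: val_inj => /=; by rewrite ew mulnC.
- by move=> [w _ ->] /=; rewrite dvdn_mulr.
Qed.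

Lemma count_tz d j : j <= d -> #|[set u : 'I_(2 ^ d) | j <= tz d u]| = 2 ^ (d - j).
Proof.
move=> jd; rewrite -count_mult //; apply: eq_card => u; rewrite !inE.
exact: tz_dvd.
Qed.

Lemma sum_ind (T : finType) (P : pred T) : \sum_(x : T) (P x : nat) = #|[set x | P x]|.
Proof.
rewrite -sum1_card [RHS]big_mkcond /=; apply: eq_bigr => x _; by rewrite inE; case: (P x).
Qed.

Definition Zc (p : {poly 'F_2}) d n (A : {set 'I_n}) j (f : coeffs d 2) : nat :=
  \sum_(a in A) ((j <= tz d (hv p d f a)) : nat).

Lemma S1 (p : {poly 'F_2}) d n (A : {set 'I_n}) j :
  irreducible_poly p -> size p = d.+1 -> n <= 2 ^ d -> j <= d ->
  \sum_(f : coeffs d 2) Zc p A j f = #|A| * (2 ^ (d - j) * 2 ^ d).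
Proof.
move=> irr sp hn jd; rewrite /Zc exchange_big /= -sum_nat_const.
apply: eq_bigr => a _; rewrite sum_ind.
rewrite (count1 (fun v => j <= tz d v) irr sp); last exact: leq_trans (ltn_ord a) hn.
by rewrite count_tz.
Qed.

Lemma S2 (p : {poly 'F_2}) d n (A : {set 'I_n}) j :
  irreducible_poly p -> size p = d.+1 -> n <= 2 ^ d -> j <= d ->
  \sum_(f : coeffs d 2) (Zc p A j f) ^ 2 =
  #|A| * (2 ^ (d - j) * 2 ^ d + (#|A|.-1) * (2 ^ (d - j)) ^ 2).
Proof.
move=> irr sp hn jd.
have hlt : forall a : 'I_n, a < 2 ^ d by move=> a; exact: leq_trans (ltn_ord a) hn.
transitivity (\sum_(a in A) \sum_(b in A) \sum_(f : coeffs d 2)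
   (((j <= tz d (hv p d f a)) && (j <= tz d (hv p d f b))) : nat)).
  rewrite (eq_bigr (fun f => Zc p A j f * Zc p A j f)); last by move=> f _; rewrite mulnn.
  rewrite /Zc; under eq_bigr => f _ do rewrite big_distrl /=.
  rewrite exchange_big /=; apply: eq_bigr => a aA.
  under eq_bigr => f _ do rewrite big_distrr /=.
  rewrite exchange_big /=; apply: eq_bigr => b bA; apply: eq_bigr => f _.
  by case: (j <= _); case: (j <= _).
rewrite -sum_nat_const; apply: eq_bigr => a aA.
rewrite (bigD1 a) //=; congr (_ + _).
  rewrite sum_ind -count_tz // -(count1 (fun v => j <= tz d v) irr sp (hlt a)).
  by apply: eq_card => f; rewrite !inE andbb.
rewrite (eq_bigr (fun _ => (2 ^ (d - j)) ^ 2)).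
  rewrite sum_nat_const; congr (_ * _).
  rewrite (cardsD1 a A) aA /=; apply: eq_card => b; rewrite !inE andbC.
  done.
move=> b /andP [bA ba]; rewrite sum_ind.
rewrite (count2 (fun v => j <= tz d v) (fun v => j <= tz d v) irr sp _ (hlt a) (hlt b)).
  by rewrite count_tz // mulnn.
by apply: contra ba => /eqP e; apply/eqP/val_inj.
Qed.

Lemma cheb (p : {poly 'F_2}) d n (A : {set 'I_n}) j :
  irreducible_poly p -> size p = d.+1 -> n <= 2 ^ d -> j <= d -> 0 < #|A| ->
  #|[set f : coeffs d 2 | Zc p A j f == 0]| * (#|A| * 2 ^ (d - j)) <= (2 ^ d) ^ 3.
Proof.
move=> irr sp hn jd A0.
set N := 2 ^ d; set c := 2 ^ (d - j); set K := #|[set f : coeffs d 2 | Zc p A j f == 0]|.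
have hF : #|{: coeffs d 2}| = N ^ 2 by rewrite card_ffun !card_ord.
have H : \sum_(f : coeffs d 2) (N ^ 2 * (Zc p A j f) ^ 2 + (#|A| * c) ^ 2) >=
         \sum_(f : coeffs d 2) (2 * N * Zc p A j f * (#|A| * c) + (Zc p A j f == 0 : nat) * (#|A| * c) ^ 2).
  apply: leq_sum => f _; case: eqP => [->|_]; first by rewrite !muln0 !add0n mul1n.
  rewrite mul0n addn0; set z := Zc p A j f; set m := #|A| * c.
  have := (nat_Cauchy (N * z) m).1; rewrite expnMn; nia.
rewrite !big_split /= in H. rewrite -!big_distrr /= in H. rewrite -!big_distrl /= in H. rewrite -big_distrr /= sum_nat_const in H.
rewrite sum_ind -/K in H.
rewrite (S2 _ irr sp hn jd) -/N -/c in H.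
have H1 := S1 A irr sp hn jd; rewrite -/N -/c in H1.
rewrite H1 in H. move: H. rewrite card_ffun !card_ord -/N.
have c0 : 0 < c by rewrite expn_gt0.
have hac : 0 < #|A| * c by rewrite muln_gt0 A0.
move=> H; rewrite -(leq_pmul2l hac).
move: H A0; case: #|A| => // a' H _ /=.
rewrite succnK in H. nia.
Qed.

Local Open Scope ring_scope.

Lemma pow2z (R : realType) (L M : nat) :
  (2:R) ^ (- ((M%:Z - L%:Z + 9)%R)) = 2 ^+ L / 2 ^+ (M + 9).
Proof.
have -> : - ((M%:Z - L%:Z + 9)%R) = L%:Z + (- (M + 9)%N%:Z) by rewrite PoszD; ring.
by rewrite exprzDr ?unitfE ?pnatr_eq0 // -invr_expz.
Qed.

Lemma E1_ok (R : realType) (L M a s : nat) : (2 ^ s <= a < 2 ^ s.+1)%N ->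
  (M <= s + 7)%N -> (s <= M + 7)%N ->
  (2 ^- 16 * ((2 ^ L)%N%:R : R) <= (2:R) ^ (- ((M%:Z - L%:Z + 9)%R)) * a%:R) &&
  ((2:R) ^ (- ((M%:Z - L%:Z + 9)%R)) * a%:R <= 2 ^- 1 * ((2 ^ L)%N%:R : R)).
Proof.
move=> /andP [h1 h2] h3 h4.
have hC : (2 ^ (M + 9) <= 2 ^ 16 * a)%N.
  apply: leq_trans (_ : 2 ^ (s + 16) <= _)%N; first by rewrite leq_exp2l //; lia.
  by rewrite expnD mulnC leq_mul2l h1 orbT.
have hD : (a <= 2 ^ (M + 8))%N.
  apply: leq_trans (ltnW h2) _; by rewrite leq_exp2l //; lia.
rewrite pow2z natrX.
move: hC hD; rewrite -!(ler_nat R) !natrM !natrX => hC hD.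
set B := (2:R) ^+ L.
have Bp : 0 < B by rewrite exprn_gt0.
have Cp : 0 < (2:R) ^+ (M + 9) by rewrite exprn_gt0.
have Dp : 0 < (2:R) ^+ 16 by rewrite exprn_gt0.
have e9 : (2:R) ^+ (M + 9) = 2 ^+ (M + 8) * 2 by rewrite addnS exprSr.
apply/andP; split.
- rewrite mulrAC ler_pdivlMr // [_ * B]mulrC -mulrA ler_pM2l // mulrC ler_pdivrMr //.
  by rewrite mulrC.
- rewrite mulrAC ler_pdivrMr // [_ * B]mulrC -mulrA ler_pM2l // e9 mulrCA mulVf ?mulr1 //.
Qed.

Local Close Scope ring_scope.

Lemma Zc_max (p : {poly 'F_2}) d n (A : {set 'I_n}) j (f : coeffs d 2) : 0 < j ->
  (Zc p A j f == 0) = (maxf A p d f < j).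
Proof.
move=> j0; rewrite /Zc /maxf sum_nat_eq0 -(prednK j0) ltnS.
apply/forall_inP/bigmax_leqP => H a aA.
- by have := H a aA; rewrite eqb0 -ltnNge ltnS.
- by rewrite eqb0 -ltnNge ltnS; apply: H.
Qed.

Lemma maxf_le (p : {poly 'F_2}) d n (A : {set 'I_n}) (f : coeffs d 2) :
  size p = d.+1 -> maxf A p d f <= d.
Proof.
move=> sp; apply/bigmax_leqP => a _; apply: tz_le; exact: hv_lt.
Qed.

Lemma bad1_count (p : {poly 'F_2}) d n (A : {set 'I_n}) s :
  irreducible_poly p -> size p = d.+1 -> n <= 2 ^ d -> #|A| < 2 ^ s.+1 ->
  #|[set f : coeffs d 2 | s + 8 <= maxf A p d f]| * 2 ^ 7 <= (2 ^ d) ^ 2.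
Proof.
move=> irr sp hn hA.
case: (leqP (s + 8) d) => hj; last first.
  rewrite (_ : [set f | _] = finset.set0) ?cards0 //; apply/setP => f; rewrite !inE.
  by apply/negbTE; rewrite -ltnNge; apply: leq_ltn_trans (maxf_le _ _ sp) hj.
have e : [set f : coeffs d 2 | s + 8 <= maxf A p d f] = [set f | Zc p A (s + 8) f != 0].
  by apply/setP => f; rewrite !inE Zc_max ?addn_gt0 ?orbT // -leqNgt.
rewrite e -sum_ind.
apply: leq_trans (_ : (\sum_(f : coeffs d 2) Zc p A (s + 8) f) * 2 ^ 7 <= _).
  by rewrite leq_mul2r; apply/orP; right; apply: leq_sum => f _; case: eqP => /= [->|/eqP]; rewrite ?lt0n.
rewrite (S1 _ irr sp hn hj).
have ed : 2 ^ d = 2 ^ s.+1 * 2 ^ 7 * 2 ^ (d - (s + 8)).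
  by rewrite -!expnD; congr (2 ^ _); lia.
set r := 2 ^ (d - (s + 8)); set N := 2 ^ d.
have ha : #|A| * r * 2 ^ 7 <= N.
  rewrite /N ed -mulnA [r * _]mulnC mulnA leq_mul2r leq_mul2r; apply/orP; right; apply/orP; right.
  exact: ltnW.
apply: leq_trans (_ : (#|A| * r * 2 ^ 7) * N <= N * N); last by rewrite leq_mul2r ha orbT.
by rewrite mulnA mulnAC.
Qed.

Lemma bad2_count (p : {poly 'F_2}) d n (A : {set 'I_n}) s :
  irreducible_poly p -> size p = d.+1 -> n <= 2 ^ d -> 0 < #|A| -> 2 ^ s <= #|A| -> s <= d ->
  #|[set f : coeffs d 2 | maxf A p d f + 8 <= s]| * 2 ^ 7 <= (2 ^ d) ^ 2.
Proof.
move=> irr sp hn A0 hs sd.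
case: (ltnP s 8) => s8.
  rewrite (_ : [set f | _] = finset.set0) ?cards0 //; apply/setP => f; rewrite !inE.
  apply/negbTE; rewrite -ltnNge; lia.
set j := s - 7.
have j0 : 0 < j by rewrite /j; lia.
have jd : j <= d by rewrite /j; lia.
set K := #|[set f : coeffs d 2 | Zc p A j f == 0]|.
have sub : #|[set f : coeffs d 2 | maxf A p d f + 8 <= s]| <= K.
  apply: subset_leq_card; apply/fintype.subsetP => f; rewrite !inE Zc_max // /j => h; lia.
have hc := cheb irr sp hn jd A0; rewrite -/K in hc.
have e : 2 ^ s * 2 ^ (d - j) = 2 ^ 7 * 2 ^ d by rewrite -!expnD; congr (2 ^ _); rewrite /j; lia.
have h1 : K * (2 ^ 7 * 2 ^ d) <= (2 ^ d) ^ 2 * 2 ^ d.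
  apply: leq_trans (_ : K * (#|A| * 2 ^ (d - j)) <= _).
    by rewrite leq_mul2l -e leq_mul2r hs !orbT.
  by rewrite -expnSr.
rewrite mulnA (leq_pmul2r (expn_gt0 2 d)) in h1.
by apply: leq_trans h1; rewrite leq_mul2r sub orbT.
Qed.

Unset Implicit Arguments. Set Strict Implicit.

Lemma card_or (T : finType) (P Q : pred T) :
  (#|[set x | P x || Q x]| <= #|[set x | P x]| + #|[set x | Q x]|)%N.
Proof.
rewrite -!sum_ind -big_split /=; apply: leq_sum => x _; by case: (P x); case: (Q x).
Qed.

Lemma lin_aux X Y N2 : X * 2 ^ 7 <= N2 -> Y * 2 ^ 7 <= N2 -> (X + Y) * 2 ^ 6 <= N2.
Proof. rewrite (_ : 2 ^ 7 = 128) // (_ : 2 ^ 6 = 64) //; lia. Qed.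

Local Open Scope ring_scope.

Theorem lemma9 (R : realType) (n : nat) (eps : R)
  (d1 d2 d3 : nat) (p1 p2 p3 : {poly 'F_2}) (A : {set 'I_n}) :
  (1 <= n)%N -> 0 < eps < 1 ->
  (* field GF(2^d1) for G_2([n]) *)
  irreducible_poly p1 -> size p1 = d1.+1 -> (n <= 2 ^ d1)%N ->
  (* field GF(2^d2) for H_2([n],[2^5 b^2]) : 2^d2 >= n, d2 >= c = 5 + 2 log2 b *)
  irreducible_poly p2 -> size p2 = d2.+1 -> (n <= 2 ^ d2)%N ->
  (5 + 2 * log2b eps <= d2)%N ->
  (* field GF(2^d3) for H_k([2^5 b^2],[b]) : 2^d3 >= 2^5 b^2, d3 >= log2 b *)
  irreducible_poly p3 -> size p3 = d3.+1 ->
  (2 ^ 5 * bpar eps ^ 2 <= 2 ^ d3)%N -> (log2b eps <= d3)%N ->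
  A != finset.set0 ->
  prob_notE1 eps A p1 d1 d2 d3 <= 2 ^- 6.
Proof.
move=> _ _ irr sp hn _ _ _ _ _ _ _ _ An0.
have A0 : (0 < #|A|)%N by rewrite card_gt0.
have An : (#|A| <= 2 ^ d1)%N by apply: leq_trans (max_card _) _; rewrite card_ord.
set s := trunc_log 2 #|A|.
have /andP [hs1 hs2] : (2 ^ s <= #|A| < 2 ^ s.+1)%N by exact: trunc_log_bounds.
have sd : (s <= d1)%N by rewrite -(leq_exp2l _ _ (ltnSn 1)); apply: leq_trans hs1 An.
set bad := fun f : coeffs d1 2 => (s + 8 <= maxf A p1 d1 f)%N || (maxf A p1 d1 f + 8 <= s)%N.
have hbad : (#|[set f | bad f]| * 2 ^ 6 <= (2 ^ d1) ^ 2)%N.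
  have h1 := bad1_count irr sp hn hs2.
  have h2 := bad2_count irr sp hn A0 hs1 sd.
  have := card_or _ (fun f : coeffs d1 2 => (s + 8 <= maxf A p1 d1 f)%N)
                  (fun f : coeffs d1 2 => (maxf A p1 d1 f + 8 <= s)%N).
  rewrite -/bad => h3.
  apply: leq_trans (leq_mul h3 (leqnn (2 ^ 6))) _.
  exact: lin_aux h1 h2.
have hsub : forall psi : Psi d1 d2 d3 (kpar eps), ~~ E1 eps A p1 d1 d2 d3 psi -> bad psi.1.1.
  move=> psi; apply: contraR; rewrite /bad negb_or -!ltnNge => /andP [m1 m2].
  rewrite /E1 /tpar /bpar.
  apply: (E1_ok _ _ (s := s)); rewrite ?hs1 ?hs2 //; lia.
set k := kpar eps.
set G := #|{: coeffs d2 2}|; set H := #|{: coeffs d3 k}|.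
have hS : (#|[set psi : Psi d1 d2 d3 k | ~~ E1 eps A p1 d1 d2 d3 psi]| <=
           #|[set f | bad f]| * (G * H))%N.
  rewrite /G /H mulnA -(cardsT (coeffs d2 2)) -(cardsT (coeffs d3 k)) -!cardsX.
  apply: subset_leq_card; apply/fintype.subsetP => -[[f g] h]; rewrite !inE /= => /hsub.
  by rewrite /= => ->.
have hT : #|[set: Psi d1 d2 d3 k]| = ((2 ^ d1) ^ 2 * (G * H))%N.
  by rewrite cardsT !card_prod card_ffun !card_ord mulnA.
have GH : (0 < G * H)%N.
  rewrite muln_gt0 /G /H !card_ffun !card_ord !expn_gt0 //.
rewrite /prob_notE1 -/k hT.
have T0 : (0 < (2 ^ d1) ^ 2 * (G * H))%N by rewrite muln_gt0 GH andbT !expn_gt0.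
have Tp : (0 : R) < ((2 ^ d1) ^ 2 * (G * H))%N%:R by rewrite ltr0n.
rewrite ler_pdivrMr // mulrC ler_pdivlMr ?exprn_gt0 //.
rewrite -natrX -natrM ler_nat.
apply: leq_trans (_ : (#|[set f | bad f]| * (G * H) * 2 ^ 6 <= _)%N).
  by rewrite leq_mul2r hS orbT.
by rewrite mulnAC leq_mul2r hbad orbT.
Qed.
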